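(* Let $M_1$ and $M_2$ be finite-horizon MDPs with the same state space $\mathcal S$, action space $\mathcal A$, reward space $\mathcal R$ and horizon $H$. If $\max_{s,a}\|P^{M_1}(\cdot\mid s,a)-P^{M_2}(\cdot\mid s,a)\|_1\le\tilde\epsilon_P$ and $\max_{s,a,r}|R^{M_1}(r\mid s,a)-R^{M_2}(r\mid s,a)|\le\tilde\epsilon_R$, then for every policy $\pi$, $$\|\rho_\pi^{M_1}(s)-\rho_\pi^{M_2}(s)\|_1+\|\rho_\pi^{M_1}(s,a,r)-\rho_\pi^{M_2}(s,a,r)\|_1\le|\mathcal S|(|\mathcal A||\mathcal R|+1)\frac{H-1}{2}\tilde\epsilon_P+|\mathcal S||\mathcal A||\mathcal R|\tilde\epsilon_R.$$
   Context: Finite-horizon MDPs have finite spaces, a common fixed initial state $s_0$, and the state space partitioned into disjoint timestep layers $\mathcal S_h$. Visitation distributions of $\pi$ in an MDP with transition $P$ and reward distribution $R$: $\rho_\pi(s_0)=1/H$, $\rho_\pi(s)=\sum_{\tilde s\in\mathcal S_{h-1},\tilde a}\rho_\pi(\tilde s)\pi(\tilde a\mid\tilde s)P(s\mid\tilde s,\tilde a)$ for $s\in\mathcal S_h$, $h>0$; $\rho_\pi(s,a,r)=\rho_\pi(s)\pi(a\mid s)R(r\mid s,a)$. *)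

(* Defs.v *)
From mathcomp Require Import all_boot all_order all_algebra.
Set Implicit Arguments. Unset Strict Implicit. Unset Printing Implicit Defensive.
Import Order.TTheory GRing.Theory Num.Theory.
Local Open Scope ring_scope.

Section MDP.
Variables (R : realFieldType) (S A Rw : finType).

(* A layered finite-horizon MDP structure: [layer s] is the timestep h with
   s \in S_h; layers are 0..H-1; S_0 = {s0}. *)
Definition layered (H : nat) (layer : S -> nat) (s0 : S) : Prop :=
  (0 < H)%N /\ (forall s, (layer s < H)%N) /\ layer s0 = 0%N /\
  (forall s, layer s = 0%N -> s = s0).

(* P s a s' = P(s' | s, a); Rf s a r = R(r | s, a). *)
Definition is_kernel (P : S -> A -> S -> R) (Rf : S -> A -> Rw -> R) : Prop :=
  (forall s a s', 0 <= P s a s') /\ (forall s a, \sum_(s' : S) P s a s' = 1) /\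
  (forall s a r, 0 <= Rf s a r) /\ (forall s a, \sum_(r : Rw) Rf s a r = 1).

Definition is_policy (pi : S -> A -> R) : Prop :=
  (forall s a, 0 <= pi s a) /\ (forall s, \sum_(a : A) pi s a = 1).

Fixpoint rho_layer (H : nat) (layer : S -> nat) (s0 : S) (pi : S -> A -> R)
  (P : S -> A -> S -> R) (h : nat) (s : S) : R :=
  match h with
  | 0%N => if s == s0 then (H%:R)^-1 else 0
  | h'.+1 => if layer s == h'.+1 then
      \sum_(st : S | layer st == h')
        \sum_(at_ : A) rho_layer H layer s0 pi P h' st * pi st at_ * P st at_ s
      else 0
  end.

Definition rho_s H layer s0 pi P (s : S) : R :=
  rho_layer H layer s0 pi P (layer s) s.

Definition rho_sar H layer s0 pi P (Rf : S -> A -> Rw -> R) (s : S) (a : A) (r : Rw) : R :=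
  rho_s H layer s0 pi P s * pi s a * Rf s a r.

End MDP.

(* Main.v *)
Require Import Defs.
From mathcomp Require Import all_boot all_order all_algebra.
From mathcomp Require Import ring lra.
Import Order.TTheory GRing.Theory Num.Theory.
Local Open Scope ring_scope.

Section Helpers.
Variables (R : realFieldType) (S A : finType) (H : nat) (layer : S -> nat) (s0 : S)
  (pi : S -> A -> R).
Hypothesis pi0 : forall s a, 0 <= pi s a.
Hypothesis pi1 : forall s, \sum_(a : A) pi s a = 1.
Hypothesis l0 : layer s0 = 0%N.

Lemma filt_le (F : S -> R) (p : pred S) : (forall s, 0 <= F s) ->
  \sum_(s | p s) F s <= \sum_s F s.
Proof.
move=> F0; rewrite [X in _ <= X](bigID p) /= lerDl sumr_ge0 //.
Qed.

Lemma rho_ge0 P : (forall s a s', 0 <= P s a s') ->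
  forall h s, 0 <= rho_layer H layer s0 pi P h s.
Proof.
move=> P0; elim=> [|h IH] s /=.
  by case: ifP => _ //; rewrite invr_ge0 ler0n.
case: ifP => _ //; apply: sumr_ge0 => st _; apply: sumr_ge0 => a _.
by rewrite !mulr_ge0.
Qed.

Lemma rho_off P h s : layer s != h -> rho_layer H layer s0 pi P h s = 0.
Proof.
case: h => [|h] /= ne.
  case: ifP => // /eqP E; by move: ne; rewrite E l0.
by rewrite (negPf ne).
Qed.

Lemma rho_mass P : (forall s a s', 0 <= P s a s') -> (forall s a, \sum_(s' : S) P s a s' = 1) ->
  forall h, \sum_s rho_layer H layer s0 pi P h s <= (H%:R)^-1.
Proof.
move=> P0 P1 ; elim=> [|h IH] /=.
  rewrite (bigD1 s0) //= eqxx big1 ?addr0 // => s /negPf -> //.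
set r := rho_layer H layer s0 pi P h.
apply: (@le_trans _ _ (\sum_s \sum_(st | layer st == h) \sum_a r st * pi st a * P st a s)).
  apply: ler_sum => s _; case: ifP => _ //.
  apply: sumr_ge0 => st _; apply: sumr_ge0 => a _; by rewrite !mulr_ge0 // rho_ge0.
rewrite exchange_big /=.
apply: (@le_trans _ _ (\sum_(st | layer st == h) r st)).
  apply: ler_sum => st _; rewrite exchange_big /=.
  under eq_bigr do rewrite -mulr_sumr P1 mulr1.
  by rewrite -mulr_sumr pi1 mulr1.
apply: le_trans IH; apply: filt_le => st; exact: rho_ge0.
Qed.

Lemma rho_diff P1 P2 (epsP : R) : 0 <= epsP ->
  (forall s a s', 0 <= P1 s a s') -> (forall s a, \sum_(s' : S) P1 s a s' = 1) ->
  (forall s a s', 0 <= P2 s a s') -> (forall s a, \sum_(s' : S) P2 s a s' = 1) ->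
  (forall s a, \sum_(s' : S) `|P1 s a s' - P2 s a s'| <= epsP) ->
  forall h, \sum_s `|rho_layer H layer s0 pi P1 h s - rho_layer H layer s0 pi P2 h s|
     <= h%:R / H%:R * epsP.
Proof.
move=> e0 P10 P11 P20 P21 hP; elim=> [|h IH] /=.
  by rewrite big1 ?mul0r // => s _; rewrite subrr normr0.
set r1 := rho_layer H layer s0 pi P1 h.
set r2 := rho_layer H layer s0 pi P2 h.
apply: (@le_trans _ _ (\sum_s \sum_(st | layer st == h) \sum_a
   (`|r1 st - r2 st| * pi st a * P1 st a s + r2 st * pi st a * `|P1 st a s - P2 st a s|))).
  apply: ler_sum => s _; case: ifP => _; last first.
    rewrite subrr normr0; apply: sumr_ge0 => st _; apply: sumr_ge0 => a _.
    by rewrite addr_ge0 // !mulr_ge0 // ?P10 ?rho_ge0.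
  rewrite -sumrB; apply: le_trans (ler_norm_sum _ _ _) _; apply: ler_sum => st _.
  rewrite -sumrB; apply: le_trans (ler_norm_sum _ _ _) _; apply: ler_sum => a _.
  have -> : r1 st * pi st a * P1 st a s - r2 st * pi st a * P2 st a s =
    (r1 st - r2 st) * pi st a * P1 st a s + r2 st * (pi st a * (P1 st a s - P2 st a s)) by ring.
  apply: le_trans (ler_normD _ _) _.
  rewrite !normrM (ger0_norm (pi0 _ _)) (ger0_norm (P10 _ _ _)) (ger0_norm (@rho_ge0 P2 P20 _ _)).
  by rewrite !mulrA.
rewrite exchange_big /=.
apply: (@le_trans _ _ (\sum_(st | layer st == h) (`|r1 st - r2 st| + r2 st * epsP))).
  apply: ler_sum => st _; rewrite exchange_big /=.
  apply: (@le_trans _ _ (\sum_a (`|r1 st - r2 st| * pi st a + r2 st * epsP * pi st a))).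
    apply: ler_sum => a _; rewrite big_split /= -!mulr_sumr P11 mulr1 lerD2l.
    rewrite [X in _ <= X]mulrAC; apply: ler_wpM2l; first by rewrite mulr_ge0 // rho_ge0.
    exact: hP.
  by rewrite big_split /= -!mulr_sumr pi1 !mulr1.
rewrite big_split /=.
have F1 := filt_le (fun st => `|r1 st - r2 st|) (fun st => layer st == h) (fun st => normr_ge0 _).
have F2 := filt_le (fun st => r2 st * epsP) (fun st => layer st == h)
   (fun st => mulr_ge0 (@rho_ge0 P2 P20 _ _) e0).
apply: le_trans (lerD F1 F2) _.
rewrite -mulr_suml -[h.+1]addn1 natrD !mulrDl; apply: lerD => //.
rewrite div1r; apply: ler_wpM2r => //; exact: rho_mass.
Qed.

End Helpers.

Lemma layer_sum (R : realFieldType) (S : finType) (H : nat) (layer : S -> nat)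
  (F : nat -> S -> R) : (forall s, (layer s < H)%N) ->
  (forall h s, layer s != h -> F h s = 0) ->
  \sum_s F (layer s) s = \sum_(h < H) \sum_s F h s.
Proof.
move=> lt F0; rewrite exchange_big; apply: eq_bigr => s _.
rewrite (bigD1 (Ordinal (lt s))) //= big1 ?addr0 // => i ne; apply: F0.
apply/eqP => E; move/negP: ne; apply; apply/eqP; apply: val_inj => /=; by rewrite E.
Qed.

Lemma nat_sum2 (R : realFieldType) n :
  (\sum_(h < n) (h%:R : R)) * 2 = n%:R * (n%:R - 1).
Proof.
elim: n => [|n IH]; first by rewrite big_ord0; ring.
rewrite big_ord_recr /= mulrDl IH -natr1; ring.
Qed.


Theorem lemma8 (R : realFieldType) (S A Rw : finType) (H : nat)
  (layer : S -> nat) (s0 : S)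
  (P1 P2 : S -> A -> S -> R) (R1 R2 : S -> A -> Rw -> R) (epsP epsR : R) :
  layered H layer s0 ->
  is_kernel P1 R1 -> is_kernel P2 R2 ->
  (forall s a, \sum_(s' : S) `|P1 s a s' - P2 s a s'| <= epsP) ->
  (forall s a r, `|R1 s a r - R2 s a r| <= epsR) ->
  forall pi : S -> A -> R, is_policy pi ->
  \sum_(s : S) `|rho_s H layer s0 pi P1 s - rho_s H layer s0 pi P2 s|
  + \sum_(s : S) \sum_(a : A) \sum_(r : Rw)
      `|rho_sar H layer s0 pi P1 R1 s a r - rho_sar H layer s0 pi P2 R2 s a r|
  <= #|S|%:R * (#|A|%:R * #|Rw|%:R + 1) * ((H%:R - 1) / 2) * epsP
     + #|S|%:R * #|A|%:R * #|Rw|%:R * epsR.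
Proof.
move=> [H0 [Hlt [l0 lz]]] [P10 [P11 [R10 R11]]] [P20 [P21 [R20 R21]]] hP hR pi [pi0 pi1].
case: (pickP (@predT S)) => [s _|S0]; last first.
  have cS : #|S| = 0%N by apply: eq_card0.
  rewrite cS !mul0r addr0 !big_pred0 ?addr0 // => x; by have := S0 x.
have [a _|A0] := pickP (@predT A); last first.
  by move: (pi1 s); rewrite big_pred0 // => /eqP; rewrite eq_sym oner_eq0.
have [r _|W0] := pickP (@predT Rw); last first.
  by move: (R11 s a); rewrite big_pred0 // => /eqP; rewrite eq_sym oner_eq0.
have eP0 : 0 <= epsP := le_trans (sumr_ge0 _ (fun _ _ => normr_ge0 _)) (hP s a).
have eR0 : 0 <= epsR := le_trans (normr_ge0 _) (hR s a r).
have Hn : H%:R != 0 :> R by rewrite pnatr_eq0 -lt0n.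
have n2 : 2 != 0 :> R by rewrite pnatr_eq0.
set rho1 := rho_s H layer s0 pi P1. set rho2 := rho_s H layer s0 pi P2.
have Dle : \sum_s `|rho1 s - rho2 s| <= (H%:R - 1)/2 * epsP.
  rewrite /rho1 /rho2 /rho_s (@layer_sum _ _ H layer (fun h s =>
     `|rho_layer H layer s0 pi P1 h s - rho_layer H layer s0 pi P2 h s|)) //; last first.
    by move=> h x ne; rewrite !(@rho_off _ _ _ H layer s0 pi l0) // subrr normr0.
  apply: (@le_trans _ _ (\sum_(h < H) h%:R / H%:R * epsP)).
    apply: ler_sum => h _; exact: (@rho_diff _ _ _ H layer s0 pi pi0 pi1 P1 P2 epsP eP0 P10 P11 P20 P21 hP h).
  rewrite -!mulr_suml.
  rewrite -[X in X * _ * _ <= _](mulfK n2) nat_sum2.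
  rewrite le_eqVlt; apply/orP; left; apply/eqP; field.
  by [].
have Mle : \sum_s rho2 s <= 1.
  rewrite /rho2 /rho_s (@layer_sum _ _ H layer (fun h s => rho_layer H layer s0 pi P2 h s)) //; last first.
    by move=> h x ne; rewrite (@rho_off _ _ _ H layer s0 pi l0).
  apply: (@le_trans _ _ (\sum_(h < H) (H%:R)^-1)).
    apply: ler_sum => h _; exact: (@rho_mass _ _ _ H layer s0 pi pi0 pi1 P2 P20 P21 h).
  rewrite sumr_const card_ord.
  have -> : ((H%:R : R)^-1 *+ H) = (H%:R)^-1 * H%:R by rewrite mulr_natr.
  by rewrite mulVf.
have SARle : \sum_s \sum_a \sum_r `|rho_sar H layer s0 pi P1 R1 s a r - rho_sar H layer s0 pi P2 R2 s a r|
   <= \sum_s `|rho1 s - rho2 s| + #|Rw|%:R * epsR.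
  have r20 : forall x, 0 <= rho2 x.
    by move=> x; exact: (@rho_ge0 _ _ _ H layer s0 pi pi0 P2 P20 (layer x) x).
  apply: (@le_trans _ _ (\sum_s (`|rho1 s - rho2 s| + rho2 s * (#|Rw|%:R * epsR)))); last first.
    rewrite big_split /= -mulr_suml lerD2l.
    rewrite -[X in _ <= X]mul1r; apply: ler_wpM2r => //; by rewrite mulr_ge0.
  apply: ler_sum => x _.
  apply: (@le_trans _ _ (\sum_b (`|rho1 x - rho2 x| * pi x b + rho2 x * (#|Rw|%:R * epsR) * pi x b))); last first.
    by rewrite big_split /= -!mulr_sumr pi1 !mulr1.
  apply: ler_sum => b _.
  apply: (@le_trans _ _ (\sum_w (`|rho1 x - rho2 x| * pi x b * R1 x b w + rho2 x * pi x b * epsR))); last first.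
    rewrite big_split /= -mulr_sumr R11 mulr1 sumr_const -mulr_natr.
    rewrite le_eqVlt; apply/orP; left; apply/eqP; ring.
  apply: ler_sum => w _; rewrite /rho_sar -/rho1 -/rho2.
  have -> : rho1 x * pi x b * R1 x b w - rho2 x * pi x b * R2 x b w =
    (rho1 x - rho2 x) * pi x b * R1 x b w + rho2 x * pi x b * (R1 x b w - R2 x b w) by ring.
  apply: le_trans (ler_normD _ _) _.
  rewrite !normrM (ger0_norm (pi0 _ _)) (ger0_norm (R10 _ _ _)) (ger0_norm (r20 _)) lerD2l.
  apply: ler_wpM2l; [by rewrite mulr_ge0 | exact: hR].
have cS : 1 <= #|S|%:R :> R by rewrite ler1n; apply/card_gt0P; exists s.
have cA : 1 <= #|A|%:R :> R by rewrite ler1n; apply/card_gt0P; exists a.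
have cW : 1 <= #|Rw|%:R :> R by rewrite ler1n; apply/card_gt0P; exists r.
have cH : 1 <= H%:R :> R by rewrite ler1n.
have x0 : 0 <= (H%:R - 1) / 2 * epsP.
  by rewrite mulr_ge0 // divr_ge0 // subr_ge0.
apply: le_trans (lerD Dle (le_trans SARle (lerD Dle (lexx _)))) _.
set x := (H%:R - 1) / 2 * epsP.
set cs := (#|S|%:R : R). set ca := (#|A|%:R : R). set cw := (#|Rw|%:R : R).
have k0 : 1 <= ca * cw by rewrite -[1]mulr1; apply: ler_pM => //.
have k1 : 2 <= cs * (ca * cw + 1).
  apply: (@le_trans _ _ (1 * (ca * cw + 1))); first by rewrite mul1r; lra.
  have h : 0 <= ca * cw + 1 by lra.
  exact: (ler_wpM2r h cS).
have k2 : cw <= cs * ca * cw.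
  have c0 : 0 <= cw by lra.
  have h : 1 <= cs * ca.
    have := @ler_pM R 1 cs 1 ca ler01 ler01 cS cA; by rewrite mul1r.
  have := ler_wpM2r c0 h; by rewrite mul1r.
have k3 : 2 * x <= cs * (ca * cw + 1) * x := ler_wpM2r x0 k1.
have k4 : cw * epsR <= cs * ca * cw * epsR by exact: (ler_wpM2r eR0 k2).
have e : cs * (ca * cw + 1) * ((H%:R - 1) / 2) * epsP = cs * (ca * cw + 1) * x.
  by rewrite /x !mulrA.
rewrite e; lra.
Qed.
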